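(* Let $\mathcal{L}_{\rm TM}$ be the Thue–Morse language and let ${\rm S}:\mathcal{L}_{\rm TM}\to\mathbb{N}$ be a homomorphism with $\gcd({\rm S}(a),{\rm S}(b))=1$. Then $\mathbb{N}\setminus{\rm S}(\mathcal{L}_{\rm TM})$ is infinite if and only if ${\rm S}(a)+{\rm S}(b)\ge6$. If ${\rm S}(a)+{\rm S}(b)<6$, then $\mathbb{N}\setminus{\rm S}(\mathcal{L}_{\rm TM})$ is either empty or a singleton.
   Context: $\mathbb{N}=\{1,2,3,\dots\}$. Let $\theta$ be the Thue–Morse morphism on $\{a,b\}$, $\theta(a)=ab$, $\theta(b)=ba$. The Thue–Morse language $\mathcal{L}_{\rm TM}$ is the set of all nonempty finite words occurring as factors of $\theta^n(a)$ for some $n\ge0$. A homomorphism ${\rm S}:\mathcal{L}_{\rm TM}\to\mathbb{N}$ is a map with ${\rm S}(w_1\cdots w_n)={\rm S}(w_1)+\cdots+{\rm S}(w_n)$, determined by ${\rm S}(a),{\rm S}(b)\in\mathbb{N}$. *)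

(* Defs.v *)
From mathcomp Require Import all_boot.
Set Implicit Arguments. Unset Strict Implicit. Unset Printing Implicit Defensive.

Definition letter_a : bool := false.
Definition letter_b : bool := true.

Definition tm_theta (w : seq bool) : seq bool :=
  flatten [seq [:: x; ~~ x] | x <- w].

Definition in_TM (w : seq bool) : Prop :=
  w != [::] /\ exists n : nat, infix w (iter n tm_theta [:: letter_a]).

Definition hom_S (sa sb : nat) (w : seq bool) : nat :=
  sumn [seq (if x then sb else sa) | x <- w].

Definition in_image (sa sb : nat) (n : nat) : Prop :=
  exists w, in_TM w /\ hom_S sa sb w = n.

Definition complement_infinite (sa sb : nat) : Prop :=
  forall m : nat, exists n, m < n /\ ~ in_image sa sb n.

Definition complement_at_most_one (sa sb : nat) : Prop :=
  forall n1 n2 : nat, 0 < n1 -> 0 < n2 ->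
    ~ in_image sa sb n1 -> ~ in_image sa sb n2 -> n1 = n2.

(* Main.v *)
Require Import Defs.
From mathcomp Require Import all_boot zify.
Set Implicit Arguments. Unset Strict Implicit. Unset Printing Implicit Defensive.

Fixpoint tmf (f n : nat) : bool :=
  match f with 0 => false | f'.+1 => if n is 0 then false else odd n (+) tmf f' n./2 end.
Definition tm n := tmf n n.

Lemma tmf_stable f1 f2 n : n <= f1 -> n <= f2 -> tmf f1 n = tmf f2 n.
Proof.
elim: f1 f2 n => [|f1 IH] [|f2] [|n] //= H1 H2.
rewrite (IH f2) //; lia.
Qed.

Lemma tmfS f n : tmf f.+1 n.+1 = odd n.+1 (+) tmf f (n.+1)./2.
Proof. by []. Qed.

Lemma tm_double n : tm n.*2 = tm n.
Proof.
case: n => [//|n]. rewrite /tm doubleS tmfS.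
have -> : (n.*2.+2)./2 = n.+1 by rewrite -doubleS doubleK.
rewrite -[n.*2.+2]/(n.+1.*2) odd_double addFb.
apply: tmf_stable; lia.
Qed.

Lemma tm_double1 n : tm n.*2.+1 = ~~ tm n.
Proof.
rewrite /tm tmfS.
have -> : (n.*2.+1)./2 = n by rewrite -[n.*2.+1]/(true + n.*2) half_bit_double.
rewrite -[n.*2.+1]/(true + n.*2) oddD odd_double addbF /=. case: n => [//|n].
congr (~~ _). apply: tmf_stable; lia.
Qed.

Definition tmseq i L := [seq tm k | k <- iota i L].

Lemma theta_cat s1 s2 : tm_theta (s1 ++ s2) = tm_theta s1 ++ tm_theta s2.
Proof. by rewrite /tm_theta map_cat flatten_cat. Qed.

Lemma theta_mkseq N : tm_theta (tmseq 0 N) = tmseq 0 N.*2.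
Proof.
elim: N => [//|N IH].
rewrite /tmseq -addn1 iotaD map_cat theta_cat IH doubleD.
rewrite -/(tmseq 0 N.*2) /tmseq iotaD map_cat /= add0n.
by rewrite tm_double tm_double1.
Qed.

Lemma iter_theta m : iter m tm_theta [:: letter_a] = tmseq 0 (2 ^ m).
Proof.
elim: m => [//|m IH]. by rewrite iterS IH theta_mkseq expnS mul2n.
Qed.

Definition wt (sa sb : nat) (x : bool) := if x then sb else sa.
Definition W sa sb i L := hom_S sa sb (tmseq i L).

Lemma W_add sa sb i L1 L2 : W sa sb i (L1 + L2) = W sa sb i L1 + W sa sb (i + L1) L2.
Proof. by rewrite /W /tmseq /hom_S iotaD !map_cat sumn_cat. Qed.

Lemma W_1 sa sb i : W sa sb i 1 = wt sa sb (tm i).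
Proof. by rewrite /W /hom_S /= addn0. Qed.

Lemma W_0 sa sb i : W sa sb i 0 = 0.
Proof. by []. Qed.

Lemma wt_neg sa sb x : wt sa sb x + wt sa sb (~~ x) = sa + sb.
Proof. by case: x => /=; rewrite // addnC. Qed.

Lemma W_2 sa sb i : W sa sb i.*2 2 = sa + sb.
Proof.
rewrite -[2]/(1+1) W_add !W_1 addn1 tm_double1 tm_double. exact: wt_neg.
Qed.

Lemma W_even sa sb i k : W sa sb i.*2 k.*2 = k * (sa + sb).
Proof.
elim: k => [//|k IH]. rewrite doubleS -[k.*2.+2]addn2 W_add IH.
rewrite -doubleD W_2 mulSn; lia.
Qed.

Lemma in_TM_tmseq i L : in_TM (tmseq i L.+1).
Proof.
split => //. exists (i + L.+1). rewrite iter_theta.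
apply/infixP. exists (tmseq 0 i), (tmseq (i + L.+1) (2 ^ (i + L.+1) - (i + L.+1))).
have H : i + L.+1 <= 2 ^ (i + L.+1) by apply: ltnW; apply: ltn_expl.
rewrite /tmseq -!map_cat -iotaD -iotaD; congr (map _ (iota _ _)); lia.
Qed.

Lemma in_TM_inv w : in_TM w -> exists i L, w = tmseq i L.+1.
Proof.
case=> w0 [m]. rewrite iter_theta => /infixP [p [q E]].
case: w w0 E => [//|x w] _ E. exists (size p), (size w).
have : take (size w).+1 (drop (size p) (tmseq 0 (2 ^ m))) = x :: w.
  by rewrite E drop_size_cat // take_size_cat.
by rewrite /tmseq -map_drop -map_take drop_iota take_iota add0n => <-;
  congr (map _ (iota _ _)); have := f_equal size E; rewrite !size_cat /= size_map size_iota => ->; lia.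
Qed.

Lemma W_half1 sa sb i k : W sa sb i.*2.+1 k.*2.+1 = wt sa sb (~~ tm i) + k * (sa + sb).
Proof.
rewrite -addn1 -[k.*2.+1]add1n W_add W_1 addn1 tm_double1 addn1 -doubleS W_even //.
Qed.

Lemma W_span sa sb i k :
  W sa sb i.*2.+1 k.*2.+2 = wt sa sb (~~ tm i) + k * (sa + sb) + wt sa sb (tm (i + k.+1)).
Proof.
rewrite -[k.*2.+2]addn1 W_add W_half1 W_1.
have -> : i.*2.+1 + k.*2.+1 = (i + k.+1).*2 by rewrite doubleD doubleS; lia.
by rewrite tm_double.
Qed.

Lemma W_prefix sa sb n :
  W sa sb 0 n = n./2 * (sa + sb) + (if odd n then wt sa sb (tm n./2) else 0).
Proof.
rewrite -{1}(odd_double_half n). case: (odd n) => /=.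
- by rewrite addnC W_add add0n W_1 tm_double -[0]/(0.*2) W_even.
- by rewrite add0n -[0]/(0.*2) W_even addn0.
Qed.

Lemma D_exists d x y : 0 < d -> exists i, tm i = x /\ tm (i + d) = y.
Proof.
elim/ltn_ind: d x y => d IH x y d0.
case: (ltnP d 2) => d2.
  have -> : d = 1 by lia.
  by case: x; case: y; [exists 1|exists 2|exists 0|exists 5].
have := odd_double_half d. set e := d./2.
have e0 : 0 < e by rewrite /e; lia.
have ed : e < d by rewrite /e; lia.
case: (odd d) => /= Ed.
- have [i [Hi1 Hi2]] := IH e ed x (~~ y) e0.
  exists i.*2. rewrite tm_double Hi1; split => //.
  have -> : i.*2 + d = (i + e).*2.+1 by rewrite -Ed doubleD; lia.
  by rewrite tm_double1 Hi2 negbK.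
- have [i [Hi1 Hi2]] := IH e ed x y e0.
  exists i.*2. rewrite tm_double Hi1; split => //.
  have -> : i.*2 + d = (i + e).*2 by rewrite -Ed doubleD; lia.
  by rewrite tm_double.
Qed.

Lemma img_W sa sb i L : 0 < L -> in_image sa sb (W sa sb i L).
Proof. case: L => [//|L] _. exists (tmseq i L.+1); split => //; exact: in_TM_tmseq. Qed.

Lemma img_forms sa sb k :
  [/\ in_image sa sb (k.+1 * (sa + sb)), in_image sa sb (k * (sa + sb) + sa),
      in_image sa sb (k * (sa + sb) + sb), in_image sa sb (k * (sa + sb) + sa + sa)
    & in_image sa sb (k * (sa + sb) + sb + sb)].
Proof.
split.
- rewrite -(W_even sa sb 0); exact: img_W.
- have := W_half1 sa sb 1 k; rewrite /= addnC => <-; exact: img_W.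
- have := W_half1 sa sb 0 k; rewrite /= addnC => <-; exact: img_W.
- have [i [H1 H2]] := @D_exists k.+1 true false isT.
  have := W_span sa sb i k; rewrite H1 H2 /= => E.
  by rewrite (_ : _ + _ + _ = W sa sb i.*2.+1 k.*2.+2); [exact: img_W | rewrite E; lia].
- have [i [H1 H2]] := @D_exists k.+1 false true isT.
  have := W_span sa sb i k; rewrite H1 H2 /= => E.
  by rewrite (_ : _ + _ + _ = W sa sb i.*2.+1 k.*2.+2); [exact: img_W | rewrite E; lia].
Qed.

Lemma arith s A B C r c1 c2 : c1 < s -> c2 < s -> r < s ->
  A * s + r + (B * s + c1) = C * s + c2 -> r = (c2 + s - c1) %% s.
Proof.
move=> h1 h2 hr E.
have E' : (A + B) * s + (r + c1) = C * s + c2 by rewrite mulnDl; lia.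
move: (congr1 (modn^~ s) E') => /=; rewrite !modnMDl (modn_small h2) => Em.
case: (ltnP (r + c1) s) => hl.
- move: Em; rewrite modn_small // => Em.
  have -> : c2 + s - c1 = r + s by lia.
  by rewrite modnDr modn_small.
- move: Em; rewrite (_ : r + c1 = (r + c1 - s) + s); last by lia.
  rewrite modnDr modn_small; last by lia.
  move=> Em. have -> : c2 + s - c1 = r by lia.
  by rewrite modn_small.
Qed.

Definition resL sa sb :=
  [:: 0; sa; sb; (sa + (sa + sb) - sb) %% (sa + sb); (sb + (sa + sb) - sa) %% (sa + sb)].

Lemma resid sa sb n A r : 0 < sa -> 0 < sb -> in_image sa sb n ->
  n = A * (sa + sb) + r -> r < sa + sb -> r \in resL sa sb.
Proof.
move=> a0 b0 [w [Hw <-]] En hr.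
have [i [L Ew]] := in_TM_inv Hw. subst w.
have E := W_add sa sb 0 i L.+1. rewrite add0n -/(W sa sb i L.+1) in E.
have En' : W sa sb i L.+1 = A * (sa + sb) + r := En.
rewrite En' !W_prefix in E.
set s := sa + sb in E hr *.
set c1 := (if odd i then _ else _) in E.
set c2 := (if odd (i + L.+1) then _ else _) in E.
have C1 : c1 = 0 \/ c1 = sa \/ c1 = sb.
  by rewrite /c1; case: (odd _) => //; rewrite /wt; case: (tm _); auto.
have C2 : c2 = 0 \/ c2 = sa \/ c2 = sb.
  by rewrite /c2; case: (odd _) => //; rewrite /wt; case: (tm _); auto.
have l1 : c1 < s by rewrite /s; lia.
have l2 : c2 < s by rewrite /s; lia.
have E2 : A * s + r + (i./2 * s + c1) = (i + L.+1)./2 * s + c2 by lia.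
rewrite (arith l1 l2 hr E2) /resL -/s.
have sa_s : sa < s by rewrite /s; lia.
have sb_s : sb < s by rewrite /s; lia.
case: C1 => [->|[->|->]]; case: C2 => [->|[->|->]]; rewrite !inE.
- by rewrite subn0 add0n modnn eqxx.
- by rewrite subn0 modnDr modn_small // eqxx orbT.
- by rewrite subn0 modnDr modn_small // eqxx !orbT.
- have -> : 0 + s - sa = sb by rewrite /s; lia.
  by rewrite modn_small // eqxx !orbT.
- have -> : sa + s - sa = s by lia.
  by rewrite modnn eqxx.
- by rewrite eqxx !orbT.
- have -> : 0 + s - sb = sa by rewrite /s; lia.
  by rewrite modn_small // eqxx !orbT.
- by rewrite eqxx !orbT.
- have -> : sb + s - sb = s by lia.
  by rewrite modnn eqxx.
Qed.

Lemma pigeon sa sb : 6 <= sa + sb -> exists2 r, r < sa + sb & r \notin resL sa sb.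
Proof.
move=> h.
case: (boolP (has (fun r => r \notin resL sa sb) (iota 0 (sa + sb)))).
  by move=> /hasP [r]; rewrite mem_iota add0n => /andP [_ hr] hn; exists r.
move=> /hasPn H.
have := uniq_leq_size (iota_uniq 0 (sa + sb)) (s2 := resL sa sb).
rewrite size_iota /= => H2.
have : sa + sb <= 5.
  apply: H2 => x hx. by have := H x hx; rewrite negbK.
lia.
Qed.

Lemma infinite_dir sa sb : 0 < sa -> 0 < sb -> 6 <= sa + sb -> complement_infinite sa sb.
Proof.
move=> a0 b0 h m.
have [r hr hn] := pigeon h.
exists (m.+1 * (sa + sb) + r); split.
  nia.
move=> Him. by move: (resid a0 b0 Him erefl hr); rewrite (negbTE hn).
Qed.

Definition Form sa sb n := exists k, n = k.+1 * (sa + sb) \/ n = k * (sa + sb) + sa \/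
  n = k * (sa + sb) + sb \/ n = k * (sa + sb) + sa + sa \/ n = k * (sa + sb) + sb + sb.

Lemma Form_img sa sb n : Form sa sb n -> in_image sa sb n.
Proof.
case=> k H; have [? ? ? ? ?] := img_forms sa sb k.
by case: H => [->|[->|[->|[->|->]]]].
Qed.

Lemma form_ind sa sb N0 : 0 < sa + sb -> N0 <= sa + sb ->
  (forall n, 0 < n -> n <= (sa + sb).*2 -> n <> N0 -> Form sa sb n) ->
  forall n, 0 < n -> n <> N0 -> Form sa sb n.
Proof.
move=> hs hN base n. elim/ltn_ind: n => n IH n0 nN.
case: (leqP n (sa + sb).*2) => hn; first exact: base.
have [k Hk] := IH (n - (sa + sb)) ltac:(lia) ltac:(lia) ltac:(lia).
exists k.+1. rewrite !(mulSn k.+1) !(mulSn k); lia.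
Qed.

Ltac solve_form := first [ exists 0; lia | exists 1; lia | exists 2; lia ].

Lemma form_img_all sa sb N0 : 0 < sa + sb -> N0 <= sa + sb ->
  (forall n, 0 < n -> n <= (sa + sb).*2 -> n <> N0 -> Form sa sb n) ->
  forall n, 0 < n -> n <> N0 -> in_image sa sb n.
Proof. move=> h1 h2 h3 n n0 nN; apply: Form_img; exact: (form_ind h1 h2 h3). Qed.

Ltac fin N := exists N; split; [by []|];
  apply: form_img_all => //; rewrite /Form;
  let n := fresh "n" in intros n ? ? ?;
  do 11 (destruct n as [|n]; [try lia; solve_form|]); lia.

Lemma small sa sb : 0 < sa -> 0 < sb -> gcdn sa sb = 1 -> sa + sb < 6 ->
  exists N0, N0 <= 3 /\ forall n, 0 < n -> n <> N0 -> in_image sa sb n.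
Proof.
move=> ha hb hg hs.
have : sa = 1 \/ sa = 2 \/ sa = 3 \/ sa = 4 by lia.
have : sb = 1 \/ sb = 2 \/ sb = 3 \/ sb = 4 by lia.
case=> [?|[?|[?|?]]]; subst sb;
case=> [?|[?|[?|?]]]; subst sa; try (exfalso; lia); try discriminate.
all: first [fin 0 | fin 1 | fin 3].
Qed.

Theorem theorem8 (sa sb : nat) :
  0 < sa -> 0 < sb -> gcdn sa sb = 1 ->
  (complement_infinite sa sb <-> 6 <= sa + sb) /\
  (sa + sb < 6 -> complement_at_most_one sa sb).
Proof.
move=> ha hb hg; split; [split|].
- move=> Hinf. case: (leqP 6 (sa + sb)) => // hs.
  have [N0 [hN H]] := small ha hb hg hs.
  have [n [hn nim]] := Hinf 3.
  exfalso; apply: nim; apply: H; lia.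
- exact: infinite_dir.
- move=> hs n1 n2 h1 h2 nim1 nim2.
  have [N0 [hN H]] := small ha hb hg hs.
  have e1 : n1 = N0 by case: (eqVneq n1 N0) => // ne; exfalso; apply: nim1; apply: H => //; apply/eqP.
  have e2 : n2 = N0 by case: (eqVneq n2 N0) => // ne; exfalso; apply: nim2; apply: H => //; apply/eqP.
  by rewrite e1 e2.
Qed.
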